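(* Let $n\ge2$ be even, let $Q(x)=\sum_{i=1}^{n/2-1}Tr_1^n(x^{2^i+1})+Tr_1^{n/2}(x^{2^{n/2}+1})$ on $\mathbb{F}_{2^n}$, and let $f:\mathbb{F}_{2^n}\to\mathbb{F}_2$. Then $f$ is bent-negabent if and only if $f+Q$ is bent-negabent.
   Context: $Tr_1^m(z)=z+z^2+\dots+z^{2^{m-1}}$; $Tr=Tr_1^n$. Fix a self-dual basis $\{\alpha_i\}$ of $\mathbb{F}_{2^n}$ over $\mathbb{F}_2$ ($Tr(\alpha_i\alpha_j)=\delta_{ij}$), identify $\mathbb{F}_{2^n}$ with $\mathbb{F}_2^n$ via coordinates, and let $wt(x)$ be the number of nonzero coordinates. For $g:\mathbb{F}_{2^n}\to\mathbb{F}_2$: $g$ is bent if $\left|\sum_x(-1)^{g(x)+Tr(\mu x)}\right|=2^{n/2}$ for all $\mu$; negabent if $\left|\sum_x(-1)^{g(x)+Tr(\mu x)}\mathrm{i}^{wt(x)}\right|=2^{n/2}$ for all $\mu$ ($\mathrm{i}=\sqrt{-1}$); bent-negabent if both. *)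

(* Defs.v *)
From HB Require Import structures.
From mathcomp Require Import all_boot all_order all_algebra all_field.
Set Implicit Arguments. Unset Strict Implicit. Unset Printing Implicit Defensive.
Import Order.TTheory GRing.Theory Num.Theory.
Local Open Scope ring_scope.

Section BentNegabent.
Variable F : finFieldType.

Definition trm (m : nat) (z : F) : F := \sum_(k < m) z ^+ (2 ^ k).

(* coordinates of x in the basis alpha (the unique 0/1 vector c with
   x = sum_i c_i alpha_i); None cannot occur when alpha is a basis *)
Definition coords (n : nat) (alpha : 'I_n -> F) (x : F) :
    option {ffun 'I_n -> bool} :=
  [pick c : {ffun 'I_n -> bool} | x == \sum_(i < n) (c i)%:R * alpha i].

Definition wt (n : nat) (alpha : 'I_n -> F) (x : F) : nat :=
  if coords alpha x is Some c then #|[set i | c i]| else 0%N.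

Definition trb (n : nat) (z : F) : bool := trm n z == 1.

Definition walsh (n : nat) (g : F -> bool) (mu : F) : algC :=
  \sum_(x : F) (-1) ^+ (g x (+) trb n (mu * x)).

Definition nega_walsh (n : nat) (alpha : 'I_n -> F) (g : F -> bool) (mu : F)
    : algC :=
  \sum_(x : F) (-1) ^+ (g x (+) trb n (mu * x)) * 'i ^+ (wt alpha x).

Definition bent (n : nat) (g : F -> bool) : Prop :=
  forall mu : F, `|walsh n g mu| = (2 ^ n./2)%:R.

Definition negabent (n : nat) (alpha : 'I_n -> F) (g : F -> bool) : Prop :=
  forall mu : F, `|nega_walsh alpha g mu| = (2 ^ n./2)%:R.

Definition bent_negabent (n : nat) (alpha : 'I_n -> F) (g : F -> bool) : Prop :=
  bent n g /\ negabent alpha g.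

Definition Qpoly (n : nat) (x : F) : F :=
  \sum_(1 <= i < n./2) trm n (x ^+ (2 ^ i + 1))
  + trm n./2 (x ^+ (2 ^ n./2 + 1)).

Definition Qb (n : nat) (x : F) : bool := Qpoly n x == 1.

End BentNegabent.

(* Main.v *)
Require Import Defs.
From HB Require Import structures.
From mathcomp Require Import all_boot all_order all_algebra all_field.
From mathcomp Require Import ring zify.
Set Implicit Arguments. Unset Strict Implicit. Unset Printing Implicit Defensive.
Import Order.TTheory GRing.Theory Num.Theory.
Local Open Scope ring_scope.


Section Basics.
Variable F : finFieldType.
Variable n : nat.
Hypothesis n_gt0 : (0 < n)%N.
Hypothesis cardF : #|F| = (2 ^ n)%N.

Lemma two0 : 2%:R = 0 :> F.
Proof. by apply: pcharf0; apply: (card_finPcharP cardF). Qed.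

Lemma addrr (x : F) : x + x = 0.
Proof. by rewrite -mulr2n -mulr_natr two0 mulr0. Qed.

Lemma oppF (x : F) : - x = x.
Proof. by apply/eqP; rewrite eq_sym -subr_eq0 opprK addrr. Qed.

Lemma sqrD (x y : F) : (x + y) ^+ 2 = x ^+ 2 + y ^+ 2.
Proof. by rewrite sqrrD -mulr_natr two0 mulr0 addr0. Qed.

Lemma frobD k (x y : F) : (x + y) ^+ (2 ^ k) = x ^+ (2 ^ k) + y ^+ (2 ^ k).
Proof.
elim: k => [|k IH]; first by rewrite !expr1.
by rewrite expnS mulnC !exprM IH sqrD.
Qed.

Lemma frobn (x : F) : x ^+ (2 ^ n) = x.
Proof. by rewrite -cardF expf_card. Qed.

Lemma trm_add m (a b : F) : trm m (a + b) = trm m a + trm m b.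
Proof. by rewrite /trm -big_split; apply: eq_bigr => k _; rewrite frobD. Qed.

Lemma trm0 m : trm m (0 : F) = 0.
Proof. by rewrite /trm big1 // => k _; rewrite expr0n expn_eq0. Qed.

Lemma trm_sum m I (r : seq I) (P : pred I) (G : I -> F) :
  trm m (\sum_(i <- r | P i) G i) = \sum_(i <- r | P i) trm m (G i).
Proof. exact: (big_morph _ (@trm_add m) (trm0 m)). Qed.

Lemma sqr_sum I (r : seq I) (P : pred I) (G : I -> F) :
  (\sum_(i <- r | P i) G i) ^+ 2 = \sum_(i <- r | P i) (G i) ^+ 2.
Proof. by apply: (big_morph (fun x : F => x ^+ 2) sqrD); rewrite expr0n. Qed.

Lemma trm_sqr m (z : F) : (trm m z) ^+ 2 = trm m (z ^+ 2).
Proof.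
rewrite /trm sqr_sum; apply: eq_bigr => k _.
by rewrite -!exprM mulnC -expnS expnSr.
Qed.

Lemma trm_sq_fix m (z : F) : (0 < m)%N -> z ^+ (2 ^ m) = z -> trm m (z ^+ 2) = trm m z.
Proof.
case: m => // m _ Hz; rewrite /trm.
rewrite [LHS]big_ord_recr [RHS]big_ord_recl /= -exprM -expnS Hz expr1 addrC.
by congr (_ + _); apply: eq_bigr => k _; rewrite /bump /= -exprM -expnS.
Qed.

Lemma trm_idem m (z : F) : (0 < m)%N -> z ^+ (2 ^ m) = z -> (trm m z) ^+ 2 = trm m z.
Proof. by move=> m0 Hz; rewrite trm_sqr trm_sq_fix. Qed.

Lemma idem01 (a : F) : a ^+ 2 = a -> a = 0 \/ a = 1.
Proof.
move=> H; have : a * (a - 1) = 0 by rewrite mulrBr mulr1 -expr2 H subrr.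
by move/eqP; rewrite mulf_eq0 subr_eq0 => /orP [] /eqP; [left|right].
Qed.

Lemma idemE (a : F) : a ^+ 2 = a -> a = (a == 1)%:R.
Proof. by case/idem01 => ->; rewrite ?eqxx // eq_sym oner_eq0. Qed.

Lemma idemD (a b : F) : a ^+ 2 = a -> b ^+ 2 = b -> (a + b) ^+ 2 = a + b.
Proof. by move=> Ha Hb; rewrite sqrD Ha Hb. Qed.

Lemma boolF_xor (b1 b2 : bool) : ((b1 (+) b2)%:R : F) = b1%:R + b2%:R.
Proof. by case: b1; case: b2; rewrite /= ?addr0 ?add0r ?addrr. Qed.

Lemma boolF_and (b1 b2 : bool) : ((b1 && b2)%:R : F) = b1%:R * b2%:R.
Proof. by case: b1; case: b2; rewrite /= ?mulr0 ?mul0r ?mulr1. Qed.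

Lemma boolF_eq1 (b : bool) : ((b%:R : F) == 1) = b.
Proof. by case: b; rewrite ?eqxx // eq_sym oner_eq0. Qed.

Lemma boolF_sq (b : bool) : ((b%:R : F)) ^+ 2 = b%:R.
Proof. by case: b; rewrite ?expr1n ?expr0n. Qed.

Lemma natF (w : nat) : (w%:R : F) = (odd w)%:R.
Proof.
rewrite -{1}(odd_double_half w) natrD -muln2 natrM two0 mulr0 addr0.
by case: (odd w).
Qed.

Local Notation T := (trm n).

Lemma T_sq (z : F) : T (z ^+ 2) = T z.
Proof. by apply: trm_sq_fix => //; rewrite frobn. Qed.

Lemma T_idem (z : F) : (T z) ^+ 2 = T z.
Proof. by apply: trm_idem => //; rewrite frobn. Qed.

Lemma T_frob k (z : F) : T (z ^+ (2 ^ k)) = T z.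
Proof.
elim: k => [|k IH]; first by rewrite expr1.
by rewrite expnS mulnC exprM T_sq IH.
Qed.

Lemma T_bool (z : F) : T z = (trb n z)%:R.
Proof. by rewrite /trb -idemE // T_idem. Qed.

Lemma trbD (a b : F) : trb n (a + b) = trb n a (+) trb n b.
Proof. by rewrite {1}/trb trm_add !T_bool -boolF_xor boolF_eq1. Qed.

Lemma T_scal (d z : F) : d ^+ 2 = d -> T (d * z) = d * T z.
Proof.
case/idem01 => ->; first by rewrite !mul0r trm0.
by rewrite !mul1r.
Qed.

Lemma T_scalb (b : bool) (z : F) : T (b%:R * z) = b%:R * T z.
Proof. by apply: T_scal; apply: boolF_sq. Qed.

End Basics.


Section Coords.
Variable F : finFieldType.
Variable n : nat.
Hypothesis n_gt0 : (0 < n)%N.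
Hypothesis cardF : #|F| = (2 ^ n)%N.
Variable alpha : 'I_n -> F.
Hypothesis sd : forall i j : 'I_n, trm n (alpha i * alpha j) = (i == j)%:R.
Local Notation T := (trm n).

Definition lin (c : {ffun 'I_n -> bool}) : F := \sum_(i < n) (c i)%:R * alpha i.
Definition cf (x : F) : {ffun 'I_n -> bool} := [ffun k => trb n (alpha k * x)].

Lemma T_lin j c : T (alpha j * lin c) = (c j)%:R.
Proof.
rewrite /lin mulr_sumr (trm_sum cardF).
rewrite (bigD1 j) //= mulrCA T_scalb sd eqxx mulr1 big1 ?addr0 //.
by move=> i /negbTE Hij; rewrite mulrCA T_scalb sd eq_sym Hij mulr0.
Qed.

Lemma lin_inj : injective lin.
Proof.
move=> c1 c2 H; apply/ffunP => j.
have := T_lin j c1; rewrite H T_lin => E.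
by rewrite -(boolF_eq1 F (c1 j)) -E boolF_eq1.
Qed.

Lemma lin_onto x : exists c, x = lin c.
Proof.
have : x \in codom lin.
  apply: inj_card_onto; first exact: lin_inj.
  by rewrite cardF card_ffun card_bool card_ord.
by case/codomP => c ->; exists c.
Qed.

Lemma lin_cf x : x = lin (cf x).
Proof.
have [c Hc] := lin_onto x; rewrite {1}Hc; congr lin.
apply/ffunP => k; rewrite ffunE /trb Hc T_lin.
by rewrite boolF_eq1.
Qed.

Lemma wtE x : wt alpha x = #|[set k | trb n (alpha k * x)]|.
Proof.
rewrite /wt /coords; case: pickP => [c /eqP Hc | H].
  have Hc' : x = lin c by [].
  have -> : c = cf x by apply: lin_inj; rewrite -Hc' -lin_cf.
  by apply: eq_card => k; rewrite !inE ffunE.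
by have := H (cf x); rewrite -/(lin _) -lin_cf eqxx.
Qed.

Lemma T_alpha k : T (alpha k) = 1.
Proof. by rewrite -(T_sq n_gt0 cardF) expr2 sd eqxx. Qed.

Lemma cardF_sum (P : {set 'I_n}) : (#|P|%:R : F) = \sum_(k < n) (k \in P)%:R.
Proof.
rewrite -sum1_card natr_sum big_mkcond /=; apply: eq_bigr => k _.
by case: (k \in P).
Qed.

Lemma T_decomp x : T x = \sum_(k < n) T (alpha k * x).
Proof.
rewrite {1}(lin_cf x) /lin (trm_sum cardF); apply: eq_bigr => k _.
by rewrite T_scalb T_alpha mulr1 ffunE (T_bool n_gt0 cardF).
Qed.

Lemma wt_T x : ((wt alpha x)%:R : F) = T x.
Proof.
rewrite wtE cardF_sum T_decomp; apply: eq_bigr => k _.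
by rewrite inE (T_bool n_gt0 cardF).
Qed.

Lemma odd_wt x : odd (wt alpha x) = trb n x.
Proof.
by rewrite /trb -wt_T (natF cardF) boolF_eq1.
Qed.

Definition X x := [set k | trb n (alpha k * x)].

Lemma cardXI x y : ((#|X x :&: X y|)%:R : F) = T (x * y).
Proof.
rewrite cardF_sum {2}(lin_cf y) /lin mulr_sumr (trm_sum cardF); apply: eq_bigr => k _.
rewrite !inE mulrCA T_scalb ffunE (T_bool n_gt0 cardF) boolF_and.
by rewrite mulrC [x * _]mulrC.
Qed.

Lemma XD x y : X (x + y) = (X x :|: X y) :\: (X x :&: X y).
Proof.
apply/setP => k; rewrite !inE mulrDr (trbD n_gt0 cardF).
by case: (trb n (alpha k * x)); case: (trb n (alpha k * y)).
Qed.

Lemma wt_add (x y : F) : (wt alpha (x + y)%R + 2 * #|X x :&: X y| = wt alpha x + wt alpha y)%N.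
Proof.
rewrite !wtE -/(X _) -/(X x) -/(X y) XD.
have H1 := cardsID (X x :&: X y) (X x :|: X y).
have E : (X x :|: X y) :&: (X x :&: X y) = X x :&: X y.
  by apply/setP => k; rewrite !in_setI in_setU; case: (k \in X x); case: (k \in X y).
rewrite E in H1; have H2 := cardsUI (X x) (X y).
lia.
Qed.

End Coords.


Lemma bin2_add a b : 'C(a + b, 2) = ('C(a, 2) + 'C(b, 2) + a * b)%N.
Proof.
elim: b => [|b IH]; first by rewrite addn0 muln0 !addn0.
by rewrite addnS !binS IH !bin1; lia.
Qed.

Lemma parity_s2 w I A B : (w + 2 * I = A + B)%N ->
  odd 'C(w, 2) (+) odd I = odd 'C(A, 2) (+) odd 'C(B, 2) (+) (odd A && odd B).
Proof.
move=> H.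
have E : ('C(w, 2) + 2 * ('C(I, 2) + w * I) + I * I = 'C(A, 2) + 'C(B, 2) + A * B)%N.
  have E0 : 'C(w + (I + I), 2) = 'C(A + B, 2) by rewrite -H addnn -mul2n.
  have E1 := bin2_add w (I + I); have E2 := bin2_add I I; have E3 := bin2_add A B.
  nia.
have := congr1 odd E; rewrite !oddD !oddM /= => <-.
by case: (odd 'C(w, 2)) (odd 'C(I, 2)) (odd w) (odd I) => [] [] [] [].
Qed.

Section Polar.
Variable F : finFieldType.
Variable n : nat.
Hypothesis n_gt0 : (0 < n)%N.
Hypothesis cardF : #|F| = (2 ^ n)%N.
Variable alpha : 'I_n -> F.
Hypothesis sd : forall i j : 'I_n, trm n (alpha i * alpha j) = (i == j)%:R.
Local Notation T := (trm n).

Definition S (x : F) : F := (odd 'C(wt alpha x, 2))%:R.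

Lemma S_polar x y : S (x + y) = S x + S y + T x * T y + T (x * y).
Proof.
have H := parity_s2 (wt_add n_gt0 cardF sd x y).
have HI : odd #|X alpha x :&: X alpha y| = trb n (x * y).
  by rewrite /trb -(cardXI n_gt0 cardF sd) (natF cardF) boolF_eq1.
rewrite HI !(odd_wt n_gt0 cardF sd) in H.
rewrite /S; have -> : odd 'C(wt alpha (x + y), 2) = odd 'C(wt alpha x, 2) (+) odd 'C(wt alpha y, 2)
   (+) (trb n x && trb n y) (+) trb n (x * y).
  by rewrite -H -addbA addbb addbF.
by rewrite !(boolF_xor cardF) boolF_and !(T_bool n_gt0 cardF).
Qed.

Lemma S_idem x : S x ^+ 2 = S x.
Proof. exact: boolF_sq. Qed.

End Polar.


Section QPolar.
Variable F : finFieldType.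
Variable m : nat.
Hypothesis m_gt0 : (0 < m)%N.
Hypothesis cardF : #|F| = (2 ^ (m + m))%N.
Local Notation n := (m + m)%N.
Local Notation T := (trm n).

Lemma n_gt0 : (0 < n)%N. Proof. lia. Qed.

Lemma trm_double (z : F) : trm (m + m) z = trm m z + trm m (z ^+ (2 ^ m)).
Proof.
rewrite /trm big_split_ord; congr (_ + _); apply: eq_bigr => k _.
by rewrite /= -exprM -expnD.
Qed.

Lemma exp_split (x y : F) k :
  (x + y) ^+ (2 ^ k + 1) = x ^+ (2 ^ k + 1) + y ^+ (2 ^ k + 1)
    + (x ^+ (2 ^ k) * y + y ^+ (2 ^ k) * x).
Proof. rewrite !exprD !expr1 (frobD cardF); ring. Qed.

Lemma T_swap (x y : F) i : (i <= n)%N ->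
  T (y ^+ (2 ^ i) * x) = T (x ^+ (2 ^ (n - i)) * y).
Proof.
move=> Hi; rewrite -(T_frob n_gt0 cardF (n - i)) exprMn -exprM -expnD subnKC //.
by rewrite (frobn cardF) mulrC.
Qed.

Let G (x y : F) j := T (x ^+ (2 ^ j) * y).

Lemma full_cross (x y : F) : \sum_(0 <= j < n) G x y j = T x * T y.
Proof.
rewrite big_mkord /G -(trm_sum cardF) -mulr_suml.
by rewrite -/(trm n x) (T_scal _ _ (T_idem n_gt0 cardF x)).
Qed.

Lemma Q_polar (x y : F) :
  Qpoly n (x + y) = Qpoly n x + Qpoly n y + T x * T y + T (x * y).
Proof.
have hm : n./2 = m by rewrite addnn doubleK.
rewrite /Qpoly hm.
have Ha : forall i, (1 <= i < m)%N -> T ((x + y) ^+ (2 ^ i + 1)) =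
   T (x ^+ (2 ^ i + 1)) + T (y ^+ (2 ^ i + 1)) + (G x y i + G x y (n - i)).
  move=> i /andP [_ Hi].
  by rewrite exp_split !(trm_add cardF) (T_swap x y) //; lia.
rewrite (eq_big_nat _ _ Ha) !big_split /=.
have Hb : trm m ((x + y) ^+ (2 ^ m + 1)) =
   trm m (x ^+ (2 ^ m + 1)) + trm m (y ^+ (2 ^ m + 1)) + G x y m.
  rewrite exp_split !(trm_add cardF); congr (_ + _).
  rewrite /G trm_double; congr (_ + _).
  by rewrite exprMn -exprM -expnD (frobn cardF) mulrC.
rewrite Hb.
have g0E : G x y 0 = T (x * y) by rewrite /G expr1.
have Hrev : \sum_(m.+1 <= j < n) G x y j = \sum_(1 <= i < m) G x y (n - i).
  rewrite (big_addn 0 n m.+1) (big_addn 0 m 1) big_nat_rev /=.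
  have -> : (n - m.+1 = m - 1)%N by lia.
  apply: eq_big_nat => i Hi; congr (G x y _); lia.
have Hsum : \sum_(0 <= j < n) G x y j = T (x * y) +
    (\sum_(1 <= i < m) G x y i + G x y m + \sum_(1 <= i < m) G x y (n - i)).
  rewrite (big_cat_nat _ (n := 1)) ?big_nat1 ?g0E //; last lia.
  rewrite (big_cat_nat _ (n := m)) //=; last lia.
  by rewrite [\sum_(m <= i < n) _]big_ltn ?Hrev ?addrA //; lia.
have Hc : \sum_(1 <= i < m) G x y i + \sum_(1 <= i < m) G x y (n - i) + G x y m
    = T x * T y + T (x * y).
  rewrite -full_cross Hsum.
  rewrite -[LHS]addr0 -(addrr cardF (T (x * y))); ring.
by rewrite -[in RHS]addrA -Hc; ring.
Qed.

Lemma Q_idem (x : F) : Qpoly n x ^+ 2 = Qpoly n x.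
Proof.
have hm : n./2 = m by rewrite addnn doubleK.
rewrite /Qpoly hm (sqrD cardF) (sqr_sum cardF); congr (_ + _).
  by apply: eq_bigr => i _; rewrite (T_idem n_gt0 cardF).
apply: (trm_idem cardF) => //.
by rewrite -exprM mulnDl mul1n -expnD exprD (frobn cardF) exprD expr1 mulrC.
Qed.

End QPolar.


Section QDecomp.
Variable F : finFieldType.
Variable m : nat.
Hypothesis m_gt0 : (0 < m)%N.
Local Notation n := (m + m)%N.
Hypothesis cardF : #|F| = (2 ^ n)%N.
Variable alpha : 'I_n -> F.
Hypothesis sd : forall i j : 'I_n, trm n (alpha i * alpha j) = (i == j)%:R.
Local Notation T := (trm n).

Let n_gt0 : (0 < n)%N. Proof. lia. Qed.

Let D (x : F) := Qpoly n x + S alpha x.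

Let D_add x y : D (x + y) = D x + D y.
Proof.
rewrite /D (Q_polar m_gt0 cardF) (S_polar n_gt0 cardF sd).
rewrite -[RHS]addr0 -(addrr cardF (T x * T y + T (x * y))); ring.
Qed.

Let D0 : D 0 = 0.
Proof.
have H := D_add 0 0; rewrite addr0 in H.
by apply: (addrI (D 0)); rewrite addr0 -H.
Qed.

Let D_sum (I : Type) (r : seq I) (P : pred I) (G : I -> F) :
  D (\sum_(i <- r | P i) G i) = \sum_(i <- r | P i) D (G i).
Proof. exact: (big_morph _ D_add D0). Qed.

Let D_scalb (b : bool) z : D (b%:R * z) = b%:R * D z.
Proof. by case: b; rewrite ?mul1r ?mul0r. Qed.

Let d_idem k : D (alpha k) ^+ 2 = D (alpha k).
Proof. by apply: (idemD cardF); [apply: (Q_idem m_gt0 cardF) | apply: S_idem]. Qed.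

Lemma Qb_decomp : exists v : F, forall x : F,
  Qb n x = odd 'C(wt alpha x, 2) (+) trb n (v * x).
Proof.
exists (\sum_(k < n) D (alpha k) * alpha k) => x.
have HD : D x = T ((\sum_(k < n) D (alpha k) * alpha k) * x).
  rewrite {1}(lin_cf cardF sd x) /lin D_sum mulr_suml (trm_sum cardF).
  apply: eq_bigr => k _.
  rewrite D_scalb -mulrA (T_scal _ _ (d_idem k)) ffunE (T_bool n_gt0 cardF).
  by rewrite mulrC.
have HQ : Qpoly n x = S alpha x + D x.
  by rewrite /D addrCA (addrr cardF) addr0.
by rewrite /Qb HQ HD (T_bool n_gt0 cardF) /S -(boolF_xor cardF) boolF_eq1.
Qed.

End QDecomp.


Lemma two_neq0 : (2 : algC) != 0.
Proof. by rewrite pnatr_eq0. Qed.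

Lemma ipow0 w : 'i ^+ w = (-1) ^+ (odd 'C(w, 2)) * (if odd w then 'i else 1) :> algC.
Proof.
elim: w => [|w IH]; first by rewrite expr0 /= mulr1.
rewrite exprS IH binS bin1 oddD oddS signr_addb.
case: (odd w) => /=.
  by rewrite mulrCA mulCii !mulrN1 mulr1.
by rewrite mulr1 mulrC.
Qed.

Lemma ipow w : 'i ^+ w = (-1) ^+ (odd 'C(w, 2)) *
   ((1 + 'i) / 2 + (1 - 'i) / 2 * (-1) ^+ (odd w)) :> algC.
Proof.
rewrite ipow0; congr (_ * _); case: (odd w) => /=.
  by rewrite expr1; field.
by rewrite (expr0 (-1 : algC)); field.
Qed.

Lemma normN2 (a b : int) :
  `|(1 + 'i) / 2 * a%:~R + (1 - 'i) / 2 * b%:~R| ^+ 2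
    = ((`|a| * `|a| + `|b| * `|b|)%N)%:R / 2 :> algC.
Proof.
have Ha : (a%:~R : algC) ^+ 2 = ((`|a| * `|a|)%N)%:R.
  rewrite -rmorphXn /=; transitivity ((Posz (`|a| * `|a|)%N)%:~R : algC); last by [].
  congr (_%:~R); nia.
have Hb : (b%:~R : algC) ^+ 2 = ((`|b| * `|b|)%N)%:R.
  rewrite -rmorphXn /=; transitivity ((Posz (`|b| * `|b|)%N)%:~R : algC); last by [].
  congr (_%:~R); nia.
rewrite natrD -Ha -Hb normCK.
rewrite !rmorphD !rmorphM !rmorphD !rmorph_int fmorphV rmorph_nat ?rmorphN /= conjCi rmorph1.
set I := 'i; set A := (a%:~R : algC); set B := (b%:~R : algC).
have I2 : I * I = -1 by rewrite mulCii.
rewrite [LHS](_ : _ = (A ^+ 2 + B ^+ 2) / 2 + (I * I + 1) * ((2 * A * B - A ^+ 2 - B ^+ 2) / 4)); last by field.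
by rewrite I2 addNr mul0r addr0.
Qed.

Lemma sqr2k k : ((2 ^ k) ^ 2 = 4 ^ k)%N.
Proof. by rewrite expnAC. Qed.

Lemma normW_eq (a : int) k :
  `|(a%:~R : algC)| = (2 ^ k)%:R <-> (`|a| * `|a| = 4 ^ k)%N.
Proof.
have -> : `|(a%:~R : algC)| = ((`|a|%N)%:R) by rewrite -intr_norm -abszE.
split.
  by move/eqP; rewrite eqr_nat => /eqP ->; rewrite -sqr2k.
move=> H; apply/eqP; rewrite eqr_nat -eqn_sqr sqr2k -H.
by rewrite expnS expn1.
Qed.

Lemma normN_eq (a b : int) k :
  `|(1 + 'i) / 2 * a%:~R + (1 - 'i) / 2 * b%:~R| = (2 ^ k)%:R :> algC
  <-> (`|a| * `|a| + `|b| * `|b| = 2 * 4 ^ k)%N.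
Proof.
have N2 := normN2 a b; set N := (1 + 'i) / 2 * _ + _ in N2 *.
have E : (`|N| == (2 ^ k)%:R) = (`|N| ^+ 2 == ((2 ^ k)%:R) ^+ 2).
  by rewrite eqrXn2.
have two0 := two_neq0.
split => [H | H].
  move: N2; rewrite H -natrX sqr2k => E'.
  have : ((`|a| * `|a| + `|b| * `|b|)%N%:R : algC) = (2 * 4 ^ k)%N%:R.
    by rewrite natrM E'; field.
  by move/eqP; rewrite eqr_nat => /eqP.
apply/eqP; rewrite E N2 H -natrX sqr2k natrM.
by apply/eqP; field.
Qed.

Lemma descent k : forall x y : nat, (x * x + y * y = 2 * 4 ^ k)%N -> (x * x = 4 ^ k)%N.
Proof.
elim: k => [|k IH] x y.
  rewrite expn0 muln1 => H; case: x H => [|[|x]]; case: y => [|[|y]] H; nia.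
move=> H; rewrite -(odd_double_half x) -(odd_double_half y) in H *.
rewrite expnS in H.
case: (odd x) (odd y) H => [] [] /= H; rewrite -!muln2 in H *; try nia.
have := IH x./2 y./2; rewrite expnS; nia.
Qed.


Section Walsh.
Variable F : finFieldType.
Variable n : nat.
Variable alpha : 'I_n -> F.
Hypothesis hxor : forall a b : F, trb n (a + b) = trb n a (+) trb n b.
Hypothesis hwt : forall x : F, odd (wt alpha x) = trb n x.

Lemma walsh_int (g : F -> bool) (mu : F) : walsh n g mu =
  (\sum_(x : F) (-1) ^+ (g x (+) trb n (mu * x)) : int)%:~R.
Proof. by rewrite rmorph_sum; apply: eq_bigr => x _; rewrite rmorph_sign. Qed.

Lemma walsh_ext (g g' : F -> bool) (mu : F) : (forall x, g x = g' x) -> walsh n g mu = walsh n g' mu.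
Proof. by move=> H; apply: eq_bigr => x _; rewrite H. Qed.

Lemma nega_ext (g g' : F -> bool) (mu : F) : (forall x, g x = g' x) ->
  nega_walsh alpha g mu = nega_walsh alpha g' mu.
Proof. by move=> H; apply: eq_bigr => x _; rewrite H. Qed.

Lemma walsh_shift (g : F -> bool) (v mu : F) :
  walsh n (fun x => g x (+) trb n (v * x)) mu = walsh n g (mu + v).
Proof.
apply: eq_bigr => x _; rewrite mulrDl hxor.
by case: (g x) (trb n (mu * x)) (trb n (v * x)) => [] [] [].
Qed.

Lemma nega_shift (g : F -> bool) (v mu : F) :
  nega_walsh alpha (fun x => g x (+) trb n (v * x)) mu = nega_walsh alpha g (mu + v).
Proof.
apply: eq_bigr => x _; rewrite mulrDl hxor.
by case: (g x) (trb n (mu * x)) (trb n (v * x)) => [] [] [].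
Qed.

Lemma bent_shift (g : F -> bool) (v : F) : bent n g <-> bent n (fun x => g x (+) trb n (v * x)).
Proof.
split=> H mu; first by rewrite walsh_shift.
by have := H (mu - v); rewrite walsh_shift subrK.
Qed.

Lemma negabent_shift (g : F -> bool) (v : F) :
  negabent alpha g <-> negabent alpha (fun x => g x (+) trb n (v * x)).
Proof.
split=> H mu; first by rewrite nega_shift.
by have := H (mu - v); rewrite nega_shift subrK.
Qed.

Definition s2 (x : F) := odd 'C(wt alpha x, 2).

Lemma nega_decomp (g : F -> bool) (mu : F) : nega_walsh alpha g mu =
  (1 + 'i) / 2 * walsh n (fun x => g x (+) s2 x) mu
  + (1 - 'i) / 2 * walsh n (fun x => g x (+) s2 x) (mu + 1).
Proof.
rewrite /nega_walsh /walsh !mulr_sumr -big_split; apply: eq_bigr => x _ /=.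
rewrite ipow hwt (mulrDl mu 1 x) mul1r hxor /s2 !signr_addb.
move: ((-1) ^+ g x : algC) ((-1) ^+ trb n (mu * x) : algC) ((-1) ^+ odd 'C(wt alpha x, 2) : algC)
  ((-1) ^+ trb n x : algC) ((1 + 'i) / 2) ((1 - 'i) / 2) => A B C D P Q.
ring.
Qed.

Lemma neg_iff (g : F -> bool) : negabent alpha g <-> bent n (fun x => g x (+) s2 x).
Proof.
split => H mu.
  have := H mu; rewrite nega_decomp !walsh_int normN_eq => /descent E.
  by rewrite normW_eq.
rewrite nega_decomp !walsh_int normN_eq.
have := H mu; have := H (mu + 1); rewrite !walsh_int !normW_eq => -> ->.
by rewrite addnn -mul2n.
Qed.

Lemma bent_ext (g g' : F -> bool) : (forall x, g x = g' x) -> bent n g <-> bent n g'.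
Proof.
by move=> E; split=> H mu; [rewrite -(walsh_ext mu E) | rewrite (walsh_ext mu E)].
Qed.

Lemma negabent_ext (g g' : F -> bool) : (forall x, g x = g' x) -> negabent alpha g <-> negabent alpha g'.
Proof.
by move=> E; split=> H mu; [rewrite -(nega_ext mu E) | rewrite (nega_ext mu E)].
Qed.

End Walsh.

Unset Implicit Arguments.

Theorem corollary2 (n : nat) (F : finFieldType) (alpha : 'I_n -> F)
  (f : F -> bool) :
  ~~ odd n -> (2 <= n)%N -> #|F| = (2 ^ n)%N ->
  (forall i j : 'I_n, trm n (alpha i * alpha j) = (i == j)%:R) ->
  bent_negabent alpha f <-> bent_negabent alpha (fun x => f x (+) Qb n x).
Proof.
move=> hodd hn2 cardF sd.
have [m hm] : exists m, n = (m + m)%N.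
  exists n./2; rewrite addnn -{1}(odd_double_half n) (negbTE hodd) add0n //.
subst n.
have m0 : (0 < m)%N by lia.
have n0 : (0 < m + m)%N by lia.
have hxor := trbD n0 cardF.
have hwt := odd_wt n0 cardF sd.
have [v Hv] := Qb_decomp m0 cardF sd.
pose h := fun x => f x (+) s2 alpha x.
have Ef : forall x, f x (+) Qb (m + m) x = h x (+) trb (m + m) (v * x).
  by move=> x; rewrite Hv /h /s2 addbA.
have Eh : forall x, h x (+) s2 alpha x = f x.
  by move=> x; rewrite /h -addbA addbb addbF.
have B1 := bent_ext (m + m) Ef; have N1 := negabent_ext alpha Ef.
have B2 := bent_shift hxor h v; have N2 := negabent_shift alpha hxor h v.
have K1 := neg_iff hxor hwt f; have K2 := neg_iff hxor hwt h.
have B3 := bent_ext (m + m) Eh.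
rewrite /bent_negabent; tauto.
Qed.
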